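(* Let $n\ge1$, $q\ge2$ be integers and $\mu>0$. Let $\mathbf u_1,\dots,\mathbf u_{q-2},\tilde{\mathbf r},\tilde{\mathbf s}\in\mathbb R^n$ and set $\mathbf u_q=(W_{11}\tilde{\mathbf r}+W_{12}\tilde{\mathbf s})/\sqrt{m_2}$, $\mathbf u_{q-1}=(W_{21}\tilde{\mathbf r}+W_{22}\tilde{\mathbf s})/\sqrt{m_1}$, with $W$ as in the context. Let $\mathbf w_l=\sum_{m=1}^{q-2}\alpha_{m,l}\mathbf u_m$ for $l=1,\dots,q$. Then the quantities $G_l$ and $T$ defined in the context satisfy $$G_l=\mathbf w_l\cdot\mathbf w_l+2\sqrt{\frac1\mu+\frac{q}{q-1}}\;\mathbf w_l\cdot\tilde{\mathbf r},$$ $$T=\frac12\Big(1+\mu\frac{q}{q-1}\Big)^{-1}\Big[-\frac{q}{q-1}\Big(2+\mu\frac{q}{q-1}\Big)\tilde{\mathbf r}\cdot\tilde{\mathbf r}+\frac{q}{q-1}\tilde{\mathbf s}\cdot\tilde{\mathbf s}+\frac{2}{\sqrt\mu}\sqrt{\frac{q}{q-1}}\;\tilde{\mathbf r}\cdot\tilde{\mathbf s}\Big].$$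
   Context: For $j\in\{1,2\}$: $\lambda_j=\frac12\big((\mu-1)+(-1)^{j+1}\sqrt{\mu^2-(4q^{-1}-2)\mu+1}\big)$, $m_j=\lambda_j+1$, $x_j=1-qm_j$, $N_j=q-1+x_j^2$. For $m=1,\dots,q-2$, $l=1,\dots,q$: $\alpha_{m,l}=\frac{1}{\sqrt{m(m+1)}}$ if $l\le m$, $\frac{-m}{\sqrt{m(m+1)}}$ if $l=m+1$, $0$ if $l>m+1$. $$W=\frac{1}{\sqrt{\frac1\mu+\frac{q}{q-1}}}\begin{pmatrix}\frac{1/\sqrt{m_2}}{\sqrt{N_2}}&\frac{1/\sqrt{m_1}}{\sqrt{N_1}}\\[2pt]\frac{1/\sqrt{m_1}}{\sqrt{N_1}}&-\frac{1/\sqrt{m_2}}{\sqrt{N_2}}\end{pmatrix}.$$ $$G_l=\sum_{m,m'=1}^{q-2}\alpha_{m,l}\alpha_{m',l}\mathbf u_m\cdot\mathbf u_{m'}+\frac{2}{\sqrt{N_1}}\sum_{m=1}^{q-2}\alpha_{m,l}\mathbf u_m\cdot\mathbf u_{q-1}+\frac{2}{\sqrt{N_2}}\sum_{m=1}^{q-2}\alpha_{m,l}\mathbf u_m\cdot\mathbf u_q,$$ $$T=\frac{x_2^2-1}{2N_2}\mathbf u_q\cdot\mathbf u_q+\frac{x_1^2-1}{2N_1}\mathbf u_{q-1}\cdot\mathbf u_{q-1}+\frac{x_1x_2-1}{\sqrt{N_1}\sqrt{N_2}}\mathbf u_q\cdot\mathbf u_{q-1}.$$ *)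

(* Defs.v *)
From HB Require Import structures.
From mathcomp Require Import all_boot all_order all_algebra.
Set Implicit Arguments. Unset Strict Implicit. Unset Printing Implicit Defensive.
Import Order.TTheory GRing.Theory Num.Theory.
Local Open Scope ring_scope.

Section Defs.
Variables (R : rcfType) (q : nat) (mu : R).

Definition qR : R := q%:R.

Definition disc : R := mu ^+ 2 - (4 / qR - 2) * mu + 1.
Definition lam1 : R := ((mu - 1) + Num.sqrt disc) / 2.
Definition lam2 : R := ((mu - 1) - Num.sqrt disc) / 2.
Definition m1 : R := lam1 + 1.
Definition m2 : R := lam2 + 1.
Definition x1 : R := 1 - qR * m1.
Definition x2 : R := 1 - qR * m2.
Definition N1 : R := qR - 1 + x1 ^+ 2.
Definition N2 : R := qR - 1 + x2 ^+ 2.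

Definition Wc : R := 1 / Num.sqrt (1 / mu + qR / (qR - 1)).
Definition W11 : R := Wc * ((1 / Num.sqrt m2) / Num.sqrt N2).
Definition W12 : R := Wc * ((1 / Num.sqrt m1) / Num.sqrt N1).
Definition W21 : R := Wc * ((1 / Num.sqrt m1) / Num.sqrt N1).
Definition W22 : R := - (Wc * ((1 / Num.sqrt m2) / Num.sqrt N2)).

Definition alpha (m l : nat) : R :=
  if (l <= m)%N then 1 / Num.sqrt (m%:R * (m.+1)%:R)
  else if l == m.+1 then - m%:R / Num.sqrt (m%:R * (m.+1)%:R)
  else 0.

Variable n : nat.

Definition dot (a b : 'rV[R]_n) : R := \sum_(i < n) a 0 i * b 0 i.

Definition G (u : nat -> 'rV[R]_n) (uq1 uq : 'rV[R]_n) (l : nat) : R :=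
  \sum_(1 <= m < q.-1) \sum_(1 <= m' < q.-1)
      alpha m l * alpha m' l * dot (u m) (u m')
  + 2 / Num.sqrt N1 * \sum_(1 <= m < q.-1) alpha m l * dot (u m) uq1
  + 2 / Num.sqrt N2 * \sum_(1 <= m < q.-1) alpha m l * dot (u m) uq.

Definition T (uq1 uq : 'rV[R]_n) : R :=
  (x2 ^+ 2 - 1) / (2 * N2) * dot uq uq
  + (x1 ^+ 2 - 1) / (2 * N1) * dot uq1 uq1
  + (x1 * x2 - 1) / (Num.sqrt N1 * Num.sqrt N2) * dot uq uq1.

Definition wvec (u : nat -> 'rV[R]_n) (l : nat) : 'rV[R]_n :=
  \sum_(1 <= m < q.-1) alpha m l *: u m.

End Defs.

(* Main.v *)
Require Import Defs.
From HB Require Import structures.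
From mathcomp Require Import all_boot all_order all_algebra.
From mathcomp Require Import ring lra.
Import Order.TTheory GRing.Theory Num.Theory.
Local Open Scope ring_scope.

Ltac nz := repeat (apply/andP; split); try assumption.
Ltac fld := field; try done; try nz.

Lemma Kcore (R : rcfType) (q mu m1 m2 X1 X2 N1 N2 sm1 sm2 sN1 sN2 c smu sQ : R) :
  q = 1 - X1*X2 -> m1 = (1-X1)/q -> m2 = (1-X2)/q -> mu = (1-X1)*(1-X2)/q ->
  N1 = X1*(X1-X2) -> N2 = X2*(X2-X1) ->
  sm1^+2 = m1 -> sm2^+2 = m2 -> sN1^+2 = N1 -> sN2^+2 = N2 ->
  c^+2 = 1/mu + q/(q-1) ->
  sm1*sm2*sN1*sN2*sQ = (X2-X1)*smu ->
  X1 != 0 -> X2 != 0 -> X1 - X2 != 0 -> 1 - X1 != 0 -> 1 - X2 != 0 ->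
  1 - X1*X2 != 0 -> 1 - X1 - X2 != 0 ->
  sm1 != 0 -> sm2 != 0 -> sN1 != 0 -> sN2 != 0 -> c != 0 -> smu != 0 ->
  let Q := q/(q-1) in
  let a := sm2^-1 * (1/c * (1/sm2/sN2)) in
  let b := sm2^-1 * (1/c * (1/sm1/sN1)) in
  let cc := sm1^-1 * (1/c * (1/sm1/sN1)) in
  let e := sm1^-1 * - (1/c * (1/sm2/sN2)) in
  let al2 := (X2^+2 - 1)/(2*N2) in
  let al1 := (X1^+2 - 1)/(2*N1) in
  let ga := (X1*X2 - 1)/(sN1*sN2) in
  [/\ 2 / sN1 * cc + 2 / sN2 * a = 2 * c,
      2 / sN1 * e + 2 / sN2 * b = 0,
      al2*a*a + al1*cc*cc + ga*a*cc = 1/2 * (1 + mu*Q)^-1 * (- Q * (2 + mu*Q)),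
      al2*b*b + al1*e*e + ga*b*e = 1/2 * (1 + mu*Q)^-1 * Q &
      2*al2*a*b + 2*al1*cc*e + ga*(a*e + b*cc) = 1/2 * (1 + mu*Q)^-1 * (2 / smu * sQ)].
Proof.
move=> hq hm1 hm2 hmu hN1 hN2 hs1 hs2 hn1 hn2 hc hP nX1 nX2 nX12 n1X1 n1X2 nq nS ns1 ns2 nn1 nn2 nc nsmu.
have nX21 : X2 - X1 != 0 by rewrite -opprB oppr_eq0.
have nq1 : 1 - X1*X2 - 1 != 0 by rewrite addrAC subrr add0r oppr_eq0 mulf_neq0.
have nN1 : N1 != 0 by rewrite hN1 mulf_neq0.
have nN2 : N2 != 0 by rewrite hN2 mulf_neq0.
have nA : 1 - X1*X2 - 1 + (1-X1)*(1-X2) != 0.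
  by have -> : 1 - X1*X2 - 1 + (1-X1)*(1-X2) = 1 - X1 - X2 by ring.
have nB : (1 - X1 * X2) * (1 - X1 * X2 - 1) + (1 - X1 * X2) * ((1 - X1) * (1 - X2)) != 0.
  by rewrite -mulrDr mulf_neq0.
move=> Q a b cc e al2 al1 ga.
have hQ : sQ = (X2-X1)*smu / (sm1*sm2*sN1*sN2).
  by rewrite -hP; field; nz.
split.
- have -> : 2 / sN1 * cc + 2 / sN2 * a
    = 2 / c * (1/(sm1^+2 * sN1^+2) + 1/(sm2^+2*sN2^+2)) by rewrite /cc /a; field; nz.
  rewrite hs1 hs2 hn1 hn2.
  have -> : 1/(m1*N1) + 1/(m2*N2) = c^+2.
    rewrite hc hm1 hm2 hmu hN1 hN2; subst q; field; nz.
  field; nz.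
- rewrite /e /b; field; nz.
- have -> : al2*a*a + al1*cc*cc + ga*a*cc = (1/c^+2) * ((X2^+2-1)/(2*N2) / ((sm2^+2)^+2 * sN2^+2)
     + (X1^+2-1)/(2*N1)/((sm1^+2)^+2*sN1^+2) + (X1*X2-1)/(sN1^+2 * sN2^+2 * sm1^+2 * sm2^+2)).
    rewrite /al2 /al1 /ga /a /cc. field. nz.
  rewrite hs1 hs2 hn1 hn2 hc /Q hm1 hm2 hmu hN1 hN2; subst q; field; nz.
- have -> : al2*b*b + al1*e*e + ga*b*e = (1/c^+2) * (1/(sm1^+2 * sm2^+2)) *
     ((X2^+2-1)/(2*N2 * sN1^+2) + (X1^+2-1)/(2*N1*sN2^+2) - (X1*X2-1)/(sN1^+2 * sN2^+2)).
    rewrite /al2 /al1 /ga /b /e. field. nz.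
  rewrite hs1 hs2 hn1 hn2 hc /Q hm1 hm2 hmu hN1 hN2; subst q; field; nz.
- have -> : 2*al2*a*b + 2*al1*cc*e + ga*(a*e + b*cc) = (1/c^+2) * (1/(sm1*sm2*sN1*sN2)) *
     ((X2^+2-1)/(N2 * sm2^+2) - (X1^+2-1)/(N1*sm1^+2) - (X1*X2-1)/(sm2^+2 * sN2^+2)
      + (X1*X2-1)/(sm1^+2 * sN1^+2)).
    rewrite /al2 /al1 /ga /a /b /cc /e. field. nz.
  rewrite hQ hs1 hs2 hn1 hn2 hc /Q hm1 hm2 hmu hN1 hN2; subst q; field; nz.
Qed.

Lemma Pcore (R : rcfType) (q mu m1 m2 X1 X2 N1 N2 : R) :
  q = 1 - X1*X2 -> m1 = (1-X1)/q -> m2 = (1-X2)/q -> mu = (1-X1)*(1-X2)/q ->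
  N1 = X1*(X1-X2) -> N2 = X2*(X2-X1) ->
  X1 != 0 -> X2 != 0 -> 1 - X1*X2 != 0 ->
  m1 * m2 * N1 * N2*(q/(q-1)) = (X2-X1)^+2 * mu.
Proof.
move=> hq hm1 hm2 hmu hN1 hN2 nX1 nX2 nq.
have nq1 : 1 - X1*X2 - 1 != 0 by rewrite addrAC subrr add0r oppr_eq0 mulf_neq0.
rewrite hm1 hm2 hmu hN1 hN2; subst q; field; nz.
Qed.

Arguments Pcore {R q mu m1 m2 X1 X2 N1 N2}.
Arguments Kcore {R q mu m1 m2 X1 X2 N1 N2 sm1 sm2 sN1 sN2 c smu sQ}.

Section Dot.
Variables (R : rcfType) (n : nat).

Lemma dotDl (a b c : 'rV[R]_n) : dot (a + b) c = dot a c + dot b c.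
Proof. by rewrite /dot -big_split; apply: eq_bigr => i _; rewrite mxE mulrDl. Qed.
Lemma dotZl k (a b : 'rV[R]_n) : dot (k *: a) b = k * dot a b.
Proof. by rewrite /dot mulr_sumr; apply: eq_bigr => i _; rewrite mxE mulrA. Qed.
Lemma dot0l (b : 'rV[R]_n) : dot 0 b = 0 :> R.
Proof. by rewrite /dot big1 // => i _; rewrite mxE mul0r. Qed.
Lemma dotC (a b : 'rV[R]_n) : dot a b = dot b a.
Proof. by rewrite /dot; apply: eq_bigr => i _; rewrite mulrC. Qed.
Lemma dotDr (a b c : 'rV[R]_n) : dot a (b + c) = dot a b + dot a c.
Proof. by rewrite dotC dotDl !(dotC a). Qed.
Lemma dotZr k (a b : 'rV[R]_n) : dot a (k *: b) = k * dot a b.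
Proof. by rewrite dotC dotZl dotC. Qed.
Lemma dot_suml I (r : seq I) (P : pred I) (F : I -> 'rV[R]_n) b :
  dot (\sum_(i <- r | P i) F i) b = \sum_(i <- r | P i) dot (F i) b.
Proof. exact: (big_morph (fun a => dot a b) (fun x y => dotDl x y b) (dot0l b)). Qed.
Lemma dot_sumr I (r : seq I) (P : pred I) (F : I -> 'rV[R]_n) a :
  dot a (\sum_(i <- r | P i) F i) = \sum_(i <- r | P i) dot a (F i).
Proof. by rewrite dotC dot_suml; apply: eq_bigr => i _; rewrite dotC. Qed.
Lemma dot_comb (x y z : 'rV[R]_n) (k a b : R) :
  dot x (k *: (a *: y + b *: z)) = (k*a) * dot x y + (k*b) * dot x z.
Proof. by rewrite dotZr dotDr !dotZr; ring. Qed.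
Lemma dot_comb2 (y z : 'rV[R]_n) (k a b k' a' b' : R) :
  dot (k *: (a *: y + b *: z)) (k' *: (a' *: y + b' *: z)) =
  (k*a)*(k'*a') * dot y y + (k*a)*(k'*b') * dot y z
  + (k*b)*(k'*a') * dot y z + (k*b)*(k'*b') * dot z z.
Proof. rewrite dotZl dotDl !dotZl !dot_comb (dotC z y); ring. Qed.
End Dot.

Lemma comb_scalar (R : rcfType) (p1 p2 A1 B1 A2 B2 al dr ds C : R) :
  p1*A1 + p2*A2 = C -> p1*B1 + p2*B2 = 0 ->
  p1*(al*(A1*dr + B1*ds)) + p2*(al*(A2*dr + B2*ds)) = C*(al*dr).
Proof.
move=> <- h.
have -> : p1*(al*(A1*dr + B1*ds)) + p2*(al*(A2*dr + B2*ds))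
  = (p1*A1+p2*A2)*(al*dr) + (p1*B1+p2*B2)*(al*ds) by ring.
by rewrite h; ring.
Qed.

Lemma combT (R : rcfType) (al2 al1 ga a b cc e rr rs ss K L M : R) :
  al2*a*a + al1*cc*cc + ga*a*cc = K -> al2*b*b + al1*e*e + ga*b*e = L ->
  2*al2*a*b + 2*al1*cc*e + ga*(a*e + b*cc) = M ->
  al2*(a*a*rr + a*b*rs + b*a*rs + b*b*ss) + al1*(cc*cc*rr + cc*e*rs + e*cc*rs + e*e*ss)
  + ga*(a*cc*rr + a*e*rs + b*cc*rs + b*e*ss) = K*rr + L*ss + M*rs.
Proof. move=> <- <- <-; ring. Qed.

Theorem corollary3 (R : rcfType) (n q : nat) (mu : R)
  (u : nat -> 'rV[R]_n) (rt st : 'rV[R]_n) :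
  (1 <= n)%N -> (2 <= q)%N -> 0 < mu ->
  let uq := (Num.sqrt (m2 q mu))^-1 *: (W11 q mu *: rt + W12 q mu *: st) in
  let uq1 := (Num.sqrt (m1 q mu))^-1 *: (W21 q mu *: rt + W22 q mu *: st) in
  let Q := (q%:R : R) / (q%:R - 1) in
  (forall l : nat, (1 <= l <= q)%N ->
     G q mu u uq1 uq l =
       dot (wvec q u l) (wvec q u l)
       + 2 * Num.sqrt (1 / mu + Q) * dot (wvec q u l) rt)
  /\
  T q mu uq1 uq =
    1 / 2 * (1 + mu * Q)^-1 *
      (- Q * (2 + mu * Q) * dot rt rt + Q * dot st st
       + 2 / Num.sqrt mu * Num.sqrt Q * dot rt st).
Proof.
move=> hn hq2 hmu0 uq uq1 Q.
have q2 : 2 <= (q%:R : R) by rewrite (ler_nat R 2 q).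
have qpos : 0 < (q%:R : R) by lra.
have qn0 : (q%:R : R) != 0 by rewrite gt_eqF.
pose iq := (q%:R : R)^-1.
have hiq : q%:R * iq = 1 by rewrite /iq mulfV.
have iqpos : 0 < iq by rewrite /iq invr_gt0.
have iqn0 : iq != 0 by rewrite gt_eqF.
have iqle : iq <= 1/2 by nra.
have hdisc : disc q mu = mu^+2 - (4 * iq - 2) * mu + 1 by [].
have iqmu : 0 < iq * mu by rewrite mulr_gt0.
have dpos : 0 < disc q mu by rewrite hdisc; nra.
have hD2 : (Num.sqrt (disc q mu))^+2 = disc q mu by rewrite sqr_sqrtr // ltW.
have Dpos : 0 < Num.sqrt (disc q mu) by rewrite sqrtr_gt0.
move: hD2 Dpos; set D := Num.sqrt (disc q mu) => hD2 Dpos.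
have em1 : m1 q mu = (mu - 1 + D)/2 + 1 by [].
have em2 : m2 q mu = (mu - 1 - D)/2 + 1 by [].
have hsum : m1 q mu + m2 q mu = mu + 1 by rewrite em1 em2; fld.
have hprod : m1 q mu * m2 q mu = mu * iq.
  rewrite em1 em2.
  have -> : ((mu - 1 + D)/2 + 1) * ((mu - 1 - D)/2 + 1) = ((mu+1)^+2 - D^+2)/4 by fld.
  by rewrite hD2 hdisc; fld.
have Dlt : D < mu + 1 by nra.
have m2pos : 0 < m2 q mu by rewrite em2; lra.
have m1pos : 0 < m1 q mu by rewrite em1; lra.
have m1gt : 1/2 < m1 q mu by rewrite em1; lra.
have ex1 : x1 q mu = 1 - q%:R * m1 q mu by [].
have ex2 : x2 q mu = 1 - q%:R * m2 q mu by [].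
have hq : q%:R = 1 - x1 q mu * x2 q mu.
  rewrite ex1 ex2.
  have -> : (1 - q%:R * m1 q mu) * (1 - q%:R * m2 q mu)
    = 1 - q%:R * (m1 q mu + m2 q mu) + q%:R * (q%:R * iq) * (m1 q mu * m2 q mu / iq) by fld.
  by rewrite hsum hprod hiq; fld.
have hm1 : m1 q mu = (1 - x1 q mu) / q%:R by by rewrite ex1; fld.
have hm2 : m2 q mu = (1 - x2 q mu) / q%:R by by rewrite ex2; fld.
have hmuE : mu = (1 - x1 q mu) * (1 - x2 q mu) / q%:R.
  rewrite ex1 ex2.
  have -> : (1 - (1 - q%:R * m1 q mu)) * (1 - (1 - q%:R * m2 q mu)) / q%:R
     = q%:R * (m1 q mu * m2 q mu) by fld.
  by rewrite hprod mulrA mulrC mulrA (mulrC iq) hiq mul1r.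
have eN1 : N1 q mu = q%:R - 1 + x1 q mu ^+ 2 by [].
have eN2 : N2 q mu = q%:R - 1 + x2 q mu ^+ 2 by [].
have N1pos : 0 < N1 q mu by rewrite eN1; nra.
have N2pos : 0 < N2 q mu by rewrite eN2; nra.
have hN1 : N1 q mu = x1 q mu * (x1 q mu - x2 q mu).
  by rewrite eN1 {1}hq; ring.
have hN2 : N2 q mu = x2 q mu * (x2 q mu - x1 q mu).
  by rewrite eN2 {1}hq; ring.
have x1neg : x1 q mu < 0 by rewrite ex1; nra.
have x2pos : 0 < x2 q mu.
  have : x1 q mu * x2 q mu < 0 by lra.
  nra.
have nX1 : x1 q mu != 0 by rewrite lt_eqF.
have nX2 : x2 q mu != 0 by rewrite gt_eqF.
have nX12 : x1 q mu - x2 q mu != 0 by rewrite lt_eqF // subr_lt0; lra.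
have n1X1 : 1 - x1 q mu != 0 by rewrite gt_eqF // subr_gt0; lra.
have n1X2 : 1 - x2 q mu != 0.
  have -> : 1 - x2 q mu = q%:R * m2 q mu by rewrite ex2; ring.
  by rewrite gt_eqF // mulr_gt0.
have nq : 1 - x1 q mu * x2 q mu != 0 by rewrite -hq.
have nS : 1 - x1 q mu - x2 q mu != 0.
  rewrite gt_eqF // ex1 ex2.
  have -> : 1 - (1 - q%:R * m1 q mu) - (1 - q%:R * m2 q mu) = q%:R * (m1 q mu + m2 q mu) - 1 by ring.
  rewrite hsum; nra.
have Qpos : 0 < Q by rewrite /Q divr_gt0 // subr_gt0; lra.
have cpos : 0 < 1 / mu + Q by rewrite addr_gt0 // divr_gt0.
have ns1 : Num.sqrt (m1 q mu) != 0 by rewrite gt_eqF // sqrtr_gt0.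
have ns2 : Num.sqrt (m2 q mu) != 0 by rewrite gt_eqF // sqrtr_gt0.
have nn1 : Num.sqrt (N1 q mu) != 0 by rewrite gt_eqF // sqrtr_gt0.
have nn2 : Num.sqrt (N2 q mu) != 0 by rewrite gt_eqF // sqrtr_gt0.
have nc : Num.sqrt (1 / mu + Q) != 0 by rewrite gt_eqF // sqrtr_gt0.
have nsmu : Num.sqrt mu != 0 by rewrite gt_eqF // sqrtr_gt0.
have hP : Num.sqrt (m1 q mu) * Num.sqrt (m2 q mu) * Num.sqrt (N1 q mu) * Num.sqrt (N2 q mu)
          * Num.sqrt Q = (x2 q mu - x1 q mu) * Num.sqrt mu.
  apply/eqP; rewrite -(eqrXn2 (n:=2)) //; last first.
  - by rewrite mulr_ge0 // ?sqrtr_ge0 // subr_ge0; lra.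
  - by rewrite !mulr_ge0 // sqrtr_ge0.
  rewrite !exprMn !sqr_sqrtr ?ltW //.
  have := Pcore hq hm1 hm2 hmuE hN1 hN2 nX1 nX2 nq. rewrite /Q => ->. by [].
have [E1 E2 E3 E4 E5] := Kcore hq hm1 hm2 hmuE hN1 hN2
  (sqr_sqrtr (ltW m1pos)) (sqr_sqrtr (ltW m2pos)) (sqr_sqrtr (ltW N1pos)) (sqr_sqrtr (ltW N2pos))
  (sqr_sqrtr (ltW cpos)) hP nX1 nX2 nX12 n1X1 n1X2 nq nS ns1 ns2 nn1 nn2 nc nsmu.
split.
- move=> l _; rewrite /G.
  have hww : dot (wvec q u l) (wvec q u l) = \sum_(1 <= m < q.-1) \sum_(1 <= m' < q.-1)
      alpha R m l * alpha R m' l * dot (u m) (u m').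
    rewrite /wvec dot_suml; apply: eq_bigr => m _.
    rewrite dotZl dot_sumr mulr_sumr; apply: eq_bigr => m' _; rewrite dotZr; ring.
  have hwr : dot (wvec q u l) rt = \sum_(1 <= m < q.-1) alpha R m l * dot (u m) rt.
    by rewrite /wvec dot_suml; apply: eq_bigr => m _; rewrite dotZl.
  rewrite hww hwr -addrA; congr (_ + _).
  rewrite !mulr_sumr -big_split /=; apply: eq_bigr => m _.
  rewrite /uq /uq1 !dot_comb.
  by apply: comb_scalar; [exact: E1 | exact: E2].
- rewrite /T /uq /uq1 !dot_comb2.
  apply: etrans; first by apply: combT; [exact: E3 | exact: E4 | exact: E5].
  rewrite /Q; ring.
Qed.
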